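(* Let $\mathbf{E}\subseteq\mathbf{A}$ be finite symmetric integral relation algebras such that $\mathbf{A}$ is a special extension of $\mathbf{E}$. For every $n\in\omega$, the set $$B_n=\{1'\}\cup\{x^{(i)}:x\text{ a diversity atom of }\mathbf{A},\ i<n\}\cup\{J(a,n):a\text{ a diversity atom of }\mathbf{E}\}$$ is the set of atoms of a subalgebra of $\mathbf{C}_{\mathbf{E}}(\mathbf{A})$.
   Context: Relation algebras are in the sense of Tarski; $1'$ identity, $0'$ its complement, $;$ relative product; integral: $1'$ is an atom; symmetric: $x^{\smile}=x$; a diversity atom is an atom below $0'$. Special extension: $\mathbf{A}$ is a special extension of $\mathbf{E}$ if for all diversity atoms $a,b,c$ of $\mathbf{E}$: (1) if not $a=b=c$ and $a;b\ge c$, then $x;y\ge c$ whenever $x,y$ are atoms of $\mathbf{A}$ with $x\le a$, $y\le b$; (2) if $a;a\ge a$ then $x;y\cdot a\ne0$ whenever $x,y$ are atoms of $\mathbf{A}$ below $a$. The algebra $\mathbf{C}_{\mathbf{E}}(\mathbf{A})$: for each atom $x$ of $\mathbf{A}$ let $c(x)$ be the atom of $\mathbf{E}$ with $x\le c(x)$; $T(i,j,k)$ iff $(i\le j=k)$ or $(j\le k=i)$ or $(k\le i=j)$. Atoms: $1'$ and $x^{(i)}$ for diversity atoms $x$ of $\mathbf{A}$ and $i\in\omega$. $C$ is the set of all permutations of $(1',1',1')$, $(1',x^{(i)},x^{(i)})$, and $(x^{(i)},y^{(j)},z^{(k)})$ with $x;y\ge z$ in $\mathbf{A}$ and ($c(x)=c(y)=c(z)\Rightarrow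 T(i,j,k)$). $\mathbf{C}_{\mathbf{E}}(\mathbf{A})$ is the algebra of all sets of atoms with set Boolean operations, identity $\{1'\}$, converse the identity map, and $X;Y=\{w:\exists u\in X,\exists v\in Y,(u,v,w)\in C\}$. For $a\in\mathbf{A}$ and $n\in\omega$, $J(a,n)$ is the join of all $x^{(i)}$ with $x$ a diversity atom of $\mathbf{A}$, $x\le a$, $n\le i$, together with $1'$ if $1'\le a$. *)

(* Defs.v *)
From mathcomp Require Import all_boot.
Set Implicit Arguments. Unset Strict Implicit. Unset Printing Implicit Defensive.

Record ra_ops (T : Type) := RAOps {
  ra_join  : T -> T -> T;
  ra_compl : T -> T;
  ra_comp  : T -> T -> T;
  ra_conv  : T -> T;
  ra_id    : T
}.

Section RA.
Variable T : Type.
Variable o : ra_ops T.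
Local Notation "x + y" := (ra_join o x y).
Local Notation "- x" := (ra_compl o x).
Local Notation "x ; y" := (ra_comp o x y) (at level 40, left associativity).
Local Notation "x ^c" := (ra_conv o x) (at level 2).

Definition is_RA : Prop :=
  (forall x y, x + y = y + x) /\
  (forall x y z, x + (y + z) = (x + y) + z) /\
  (forall x y, - (- x + y) + - (- x + - y) = x) /\
  (forall x y z, x ; (y ; z) = (x ; y) ; z) /\
  (forall x y z, (x + y) ; z = (x ; z) + (y ; z)) /\
  (forall x, x ; ra_id o = x) /\
  (forall x, x^c^c = x) /\
  (forall x y, (x + y)^c = x^c + y^c) /\
  (forall x y, (x ; y)^c = y^c ; x^c) /\
  (forall x y, (x^c ; - (x ; y)) + - y = - y).

Definition ra_meet (x y : T) : T := - (- x + - y).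
Definition ra_top : T := ra_id o + - ra_id o.
Definition ra_zero : T := - ra_top.
Definition ra_diversity : T := - ra_id o.

Definition ra_symmetric : Prop := forall x, x^c = x.
End RA.

Section FinRA.
Variable T : finType.
Variable o : ra_ops T.

Definition ra_le (x y : T) : bool := ra_join o x y == y.

Definition ra_atom (x : T) : bool :=
  (x != ra_zero o) && [forall y, ra_le y x ==> (y == ra_zero o) || (y == x)].

Definition ra_integral : Prop := ra_atom (ra_id o).

Definition ra_datom (x : T) : bool := ra_atom x && ra_le x (ra_diversity o).

Definition ra_subalg (E : {pred T}) : Prop :=
  (forall x y, E x -> E y -> E (ra_join o x y)) /\
  (forall x, E x -> E (ra_compl o x)) /\
  (forall x y, E x -> E y -> E (ra_comp o x y)) /\
  (forall x, E x -> E (ra_conv o x)) /\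
  E (ra_id o).

Definition sub_atom (E : {pred T}) (e : T) : bool :=
  E e && (e != ra_zero o) &&
  [forall y, (E y && ra_le y e) ==> (y == ra_zero o) || (y == e)].

Definition sub_datom (E : {pred T}) (e : T) : bool :=
  sub_atom E e && ra_le e (ra_diversity o).

Definition sub_integral (E : {pred T}) : Prop := sub_atom E (ra_id o).

Definition special_extension (E : {pred T}) : Prop :=
  (forall a b c, sub_datom E a -> sub_datom E b -> sub_datom E c ->
     ~ (a = b /\ b = c) -> ra_le c (ra_comp o a b) ->
     forall x y, ra_atom x -> ra_atom y -> ra_le x a -> ra_le y b ->
       ra_le c (ra_comp o x y)) /\
  (forall a, sub_datom E a -> ra_le a (ra_comp o a a) ->
     forall x y, ra_atom x -> ra_atom y -> ra_le x a -> ra_le y a ->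
       ra_meet o (ra_comp o x y) a <> ra_zero o).

Definition catom_of (E : {pred T}) (x : T) : option T :=
  [pick e | sub_atom E e && ra_le x e].

Definition datomA := {x : T | ra_datom x}.

(** atoms of C_E(A): None is 1', Some (x, i) is x^(i) *)
Definition Catom := option (datomA * nat).

Definition Tidx (i j k : nat) : Prop :=
  (i <= j /\ j = k) \/ (j <= k /\ k = i) \/ (k <= i /\ i = j).

Definition Cbase (E : {pred T}) (u v w : Catom) : Prop :=
  match u, v, w with
  | None, None, None => True
  | None, Some (x, i), Some (y, j) => x = y /\ i = j
  | Some (x, i), Some (y, j), Some (z, k) =>
      ra_le (val z) (ra_comp o (val x) (val y)) /\
      ((catom_of E (val x) = catom_of E (val y) /\
        catom_of E (val y) = catom_of E (val z)) -> Tidx i j k)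
  | _, _, _ => False
  end.

Definition Ccycle (E : {pred T}) (u v w : Catom) : Prop :=
  Cbase E u v w \/ Cbase E u w v \/ Cbase E v u w \/
  Cbase E v w u \/ Cbase E w u v \/ Cbase E w v u.

Definition Celt := Catom -> Prop.

Definition C_join (X Y : Celt) : Celt := fun w => X w \/ Y w.
Definition C_compl (X : Celt) : Celt := fun w => ~ X w.
Definition C_zero : Celt := fun _ => False.
Definition C_id : Celt := fun w => w = None.
Definition C_conv (X : Celt) : Celt := X.
Definition C_comp (E : {pred T}) (X Y : Celt) : Celt :=
  fun w => exists u v, X u /\ Y v /\ Ccycle E u v w.

Definition C_le (X Y : Celt) : Prop := forall w, X w -> Y w.

Definition C_subalg (E : {pred T}) (S : Celt -> Prop) : Prop :=
  S C_zero /\ S C_id /\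
  (forall X Y, S X -> S Y -> S (C_join X Y)) /\
  (forall X, S X -> S (C_compl X)) /\
  (forall X, S X -> S (C_conv X)) /\
  (forall X Y, S X -> S Y -> S (C_comp E X Y)).

Definition C_sub_atom (S : Celt -> Prop) (X : Celt) : Prop :=
  S X /\ X <> C_zero /\
  forall Y, S Y -> C_le Y X -> Y = C_zero \/ Y = X.

Definition J (a : T) (n : nat) : Celt :=
  fun w => match w with
           | None => ra_le (ra_id o) a
           | Some (x, i) => ra_le (val x) a /\ n <= i
           end.

Definition Bn (E : {pred T}) (n : nat) (X : Celt) : Prop :=
  X = C_id \/
  (exists (x : datomA) (i : nat), i < n /\ X = (fun w => w = Some (x, i))) \/
  (exists a, sub_datom E a /\ X = J a n).
End FinRA.

Arguments ra_le {T} o x y.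
Arguments ra_atom {T} o x.
Arguments ra_integral {T} o.
Arguments ra_datom {T} o x.
Arguments ra_subalg {T} o E.
Arguments sub_atom {T} o E e.
Arguments sub_datom {T} o E e.
Arguments sub_integral {T} o E.
Arguments special_extension {T} o E.
Arguments catom_of {T} o E x.
Arguments datomA {T} o.
Arguments Catom {T} o.
Arguments Cbase {T} o E u v w.
Arguments Ccycle {T} o E u v w.
Arguments Celt {T} o.
Arguments C_join {T o} X Y.
Arguments C_compl {T o} X.
Arguments C_zero {T o}.
Arguments C_id {T o}.
Arguments C_conv {T o} X.
Arguments C_comp {T} o E X Y.
Arguments C_le {T o} X Y.
Arguments C_subalg {T} o E S.
Arguments C_sub_atom {T} o S X.
Arguments J {T} o a n.
Arguments Bn {T} o E n X.

(* Main.v *)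
Require Import Defs.
From Stdlib Require Import Lia.
From mathcomp Require Import zify.
From mathcomp Require Import all_boot.
From Stdlib Require Import Classical FunctionalExtensionality PropExtensionality.
Set Implicit Arguments. Unset Strict Implicit. Unset Printing Implicit Defensive.

Section Bool.
Variable T : finType.
Variable o : ra_ops T.
Hypothesis HRA : is_RA o.
Local Notation jn := (ra_join o).
Local Notation cp := (ra_compl o).
Local Notation cmp := (ra_comp o).
Local Notation top := (ra_top o).
Local Notation zero := (ra_zero o).
Local Notation mt := (ra_meet o).
Local Notation le := (ra_le o).

Lemma jC x y : jn x y = jn y x. Proof. by case: HRA. Qed.
Lemma jA x y z : jn x (jn y z) = jn (jn x y) z. Proof. by case: HRA => _ []. Qed.
Lemma hunt x y : jn (cp (jn (cp x) y)) (cp (jn (cp x) (cp y))) = x.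
Proof. by case: HRA => _ [] _ []. Qed.

Lemma top_any x w : jn x (cp x) = jn w (cp w).
Proof.
have h1 := hunt x (cp w). have h2 := hunt (cp x) (cp w).
have h3 := hunt w (cp x). have h4 := hunt (cp w) (cp x).
have e3 : jn (cp (jn (cp x) (cp w))) (cp (jn (cp (cp x)) (cp w))) = w.
  by rewrite (jC (cp x) (cp w)) (jC (cp (cp x)) (cp w)).
have e4 : jn (cp (jn (cp x) (cp (cp w)))) (cp (jn (cp (cp x)) (cp (cp w)))) = cp w.
  by rewrite (jC (cp x) (cp (cp w))) (jC (cp (cp x)) (cp (cp w))).
set a := cp (jn (cp x) (cp w)) in h1 e3 *. set b := cp (jn (cp x) (cp (cp w))) in h1 e4 *.
set c := cp (jn (cp (cp x)) (cp w)) in h2 e3 *. set d := cp (jn (cp (cp x)) (cp (cp w))) in h2 e4 *.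
have L : jn (jn a b) (jn c d) = jn x (cp x) by rewrite h1 h2.
have R : jn (jn a c) (jn b d) = jn w (cp w) by rewrite e3 e4.
rewrite -L -R.
by rewrite -!jA (jA b c d) (jC b c) -(jA c b d).
Qed.

Lemma top_eq x : jn x (cp x) = top.
Proof. exact: top_any. Qed.

Lemma dneg x : cp (cp x) = x.
Proof.
have h1 := hunt (cp (cp x)) (cp x).
rewrite (jC (cp (cp (cp x))) (cp (cp x))) top_eq in h1.
have h2 := hunt x (cp (cp x)).
rewrite top_eq (jC (cp x) (cp (cp (cp x)))) (jC (cp top)) in h2.
by rewrite -{1}h1 h2.
Qed.

Lemma z1 : jn zero top = top.
Proof. by have := top_eq zero; rewrite /ra_zero dneg. Qed.

Lemma zz : jn zero zero = zero.
Proof.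
set e := jn zero zero.
have z2 : jn zero (cp e) = top.
  by have := hunt top top; rewrite /ra_zero z1.
have et : jn e top = top by rewrite /e -jA z1 z1.
have z3 : jn zero (cp (jn e zero)) = cp e.
  by have := hunt (cp e) top; rewrite dneg et.
have z4 : jn zero (cp (jn zero e)) = top.
  by have := hunt top (cp e); rewrite /ra_zero z2 dneg.
have : cp e = top by rewrite -z3 (jC e zero) z4.
by move=> h; rewrite -(dneg e) h.
Qed.

Lemma j0 x : jn x zero = x.
Proof.
have h := hunt x x. rewrite (jC (cp x) x) top_eq in h.
by rewrite -{1}h (jC zero) -jA zz (jC _ zero).
Qed.

Lemma j0l x : jn zero x = x.
Proof. by rewrite jC j0. Qed.

Lemma idem x : jn x x = x.
Proof.
have h := hunt (cp x) (cp x).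
rewrite (jC (cp (cp x)) (cp x)) top_eq dneg j0l in h.
by rewrite -(dneg (jn x x)) h dneg.
Qed.

Lemma leE a b : le a b <-> jn a b = b.
Proof. by split => [/eqP|h]; [|apply/eqP]. Qed.

Lemma le_refl a : le a a.
Proof. by apply/leE; rewrite idem. Qed.

Lemma le_trans a b c : le a b -> le b c -> le a c.
Proof. by move=> /leE h1 /leE h2; apply/leE; rewrite -h2 jA h1. Qed.

Lemma le_anti a b : le a b -> le b a -> a = b.
Proof. by move=> /leE h1 /leE h2; rewrite -h1 -{1}h2 jC. Qed.

Lemma le0 a : le zero a.
Proof. by apply/leE; rewrite j0l. Qed.

Lemma le0_eq a : le a zero -> a = zero.
Proof. by move=> h; apply: le_anti h (le0 _). Qed.

Lemma le_jl a b : le a (jn a b).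
Proof. by apply/leE; rewrite jA idem. Qed.

Lemma le_jr a b : le b (jn a b).
Proof. by rewrite jC; apply: le_jl. Qed.

Lemma le_lub a b c : le a c -> le b c -> le (jn a b) c.
Proof. by move=> /leE h1 /leE h2; apply/leE; rewrite -jA h2 h1. Qed.

Lemma compl_anti a b : le a b -> le (cp b) (cp a).
Proof.
move=> /leE h; have h2 := hunt (cp a) (cp b).
rewrite !dneg h in h2.
by apply/leE; rewrite -h2 jA (jC (cp b)) -jA idem.
Qed.

Lemma meet_l a b : le (mt a b) a.
Proof.
have h := hunt a (cp b). rewrite dneg in h.
apply/leE; rewrite /ra_meet.
move: h; set p := cp (jn (cp a) (cp b)); set q := cp (jn (cp a) b) => h.
transitivity (jn p (jn p q)); first by rewrite h.
by rewrite jA idem h.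
Qed.

Lemma meetC a b : mt a b = mt b a.
Proof. by rewrite /ra_meet jC. Qed.

Lemma meet_r a b : le (mt a b) b.
Proof. by rewrite meetC; apply: meet_l. Qed.

Lemma meet_glb a b c : le c a -> le c b -> le c (mt a b).
Proof.
move=> h1 h2; rewrite -(dneg c); apply: compl_anti.
by apply: le_lub; apply: compl_anti.
Qed.

Lemma meet0_le a b : mt a b = zero -> le a (cp b).
Proof.
move=> h; have h2 := hunt a b. rewrite /ra_meet in h. rewrite h j0 in h2.
rewrite -h2; have := meet_r a (cp b). by rewrite /ra_meet dneg.
Qed.

Lemma meet_compl a : mt a (cp a) = zero.
Proof. by rewrite /ra_meet dneg jC top_eq. Qed.

Lemma le_top a : le a top.
Proof. by apply/leE; rewrite -(top_eq a) jA idem. Qed.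

End Bool.

Section Main.
Variable T : finType.
Variable o : ra_ops T.
Variable E : {pred T}.
Hypothesis HRA : is_RA o.
Hypothesis Hint : ra_integral o.
Hypothesis Hsym : ra_symmetric o.
Hypothesis Hsub : ra_subalg o E.
Hypothesis HSE : special_extension o E.
Variable n : nat.
Local Notation jn := (ra_join o).
Local Notation cp := (ra_compl o).
Local Notation cmp := (ra_comp o).
Local Notation top := (ra_top o).
Local Notation zero := (ra_zero o).
Local Notation mt := (ra_meet o).
Local Notation le := (ra_le o).
Local Notation catom := (catom_of o E).

Lemma compC x y : cmp x y = cmp y x.
Proof.
case: HRA => _ [_ [_ [_ [_ [_ [_ [_ [h9 _]]]]]]]].
by rewrite -(Hsym (cmp x y)) h9 !Hsym.
Qed.

Lemma compDl x y z : cmp (jn x y) z = jn (cmp x z) (cmp y z).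
Proof. by case: HRA => _ [_ [_ [_ [h5 _]]]]. Qed.

Lemma comp_mono x x' y y' : le x x' -> le y y' -> le (cmp x y) (cmp x' y').
Proof.
move=> /(leE o) h1 /(leE o) h2.
apply: (le_trans HRA (b := cmp x' y)); apply/(leE o).
  by rewrite -compDl h1.
by rewrite (compC x') (compC x') -compDl h2.
Qed.

Lemma Ejn x y : E x -> E y -> E (jn x y). Proof. by case: Hsub => h _; apply: h. Qed.
Lemma Ecp x : E x -> E (cp x). Proof. by case: Hsub => _ [h _]; apply: h. Qed.
Lemma Ecmp x y : E x -> E y -> E (cmp x y). Proof. by case: Hsub => _ [_ [h _]]; apply: h. Qed.
Lemma Eid : E (ra_id o). Proof. by case: Hsub => _ [_ [_ [_ h]]]. Qed.
Lemma Emt x y : E x -> E y -> E (mt x y).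
Proof. by move=> hx hy; apply/Ecp/Ejn; apply: Ecp. Qed.
Lemma Etop : E top. Proof. by apply/Ejn; [apply: Eid|apply/Ecp/Eid]. Qed.

Lemma atomP x y : ra_atom o x -> le y x -> y = zero \/ y = x.
Proof.
case/andP => _ /forallP h yx. have := h y. rewrite yx /=.
by case/orP => /eqP ->; [left|right].
Qed.

Lemma atom_nz x : ra_atom o x -> x <> zero.
Proof. by case/andP => /eqP. Qed.

Lemma sub_atomP e y : sub_atom o E e -> E y -> le y e -> y = zero \/ y = e.
Proof.
case/andP => _ /forallP h Ey ye. have := h y. rewrite Ey ye /=.
by case/orP => /eqP ->; [left|right].
Qed.

Lemma sub_atom_E e : sub_atom o E e -> E e.
Proof. by case/andP => /andP []. Qed.
Lemma sub_atom_nz e : sub_atom o E e -> e <> zero.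
Proof. by case/andP => /andP [] _ /eqP. Qed.

Lemma card_min (t f : T) :
  #|[pred s | le s t]| <= #|[pred s | le s f]| -> le f t -> le t f.
Proof.
move=> hc ft.
have sub : [pred s | le s f] \subset [pred s | le s t].
  apply/subsetP => s; rewrite !inE => sf. exact: (le_trans HRA sf ft).
have := geq_leqif (subset_leqif_card sub). rewrite hc => /esym/subsetP h.
by have := h t; rewrite !inE; apply; apply: le_refl.
Qed.

Lemma exists_atom a : a <> zero -> exists x, ra_atom o x /\ le x a.
Proof.
move=> anz.
pose P := fun t => (t != zero) && le t a.
have Pa : P a by apply/andP; split; [apply/eqP|apply: le_refl].
case: (arg_minnP (fun t => #|[pred s | le s t]|) Pa) => t /andP [tnz ta] tmin.
exists t; split => //; apply/andP; split => //.
apply/forallP => y; apply/implyP => yt.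
case: (eqVneq y zero) => [->|ynz] //=; apply/eqP.
apply: (le_anti HRA yt); apply: (card_min _ yt).
apply: tmin; apply/andP; split => //; exact: (le_trans HRA yt ta).
Qed.

Lemma Eatom_exists x : ra_atom o x -> exists e, sub_atom o E e /\ le x e.
Proof.
move=> ax.
pose P := fun t => E t && le x t.
have Pt : P top by apply/andP; split; [apply: Etop|apply: le_top].
case: (arg_minnP (fun t => #|[pred s | le s t]|) Pt) => t /andP [Et xt] tmin.
exists t; split => //.
have tnz : t != zero.
  apply/eqP => t0; apply: (atom_nz ax); apply: (le0_eq HRA); by rewrite -t0.
apply/andP; split; first by apply/andP.
apply/forallP => y; apply/implyP => /andP [Ey yt].
case: (eqVneq y zero) => [->|ynz] //=; apply/eqP.
case: (atomP ax (meet_l HRA x y)) => h.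
  have xy : le x (cp y) by apply: meet0_le.
  have Pf : P (mt t (cp y)).
    apply/andP; split; first by apply: Emt => //; apply: Ecp.
    by apply: meet_glb.
  have tf : le t (mt t (cp y)) by apply: (card_min (tmin _ Pf) (meet_l HRA _ _)).
  have ty : le t (cp y) := le_trans HRA tf (meet_r HRA _ _).
  have : le y (mt y (cp y)) by apply: (meet_glb HRA (le_refl HRA _) (le_trans HRA yt ty)).
  by rewrite meet_compl // => /(le0_eq HRA) /eqP; rewrite (negbTE ynz).
have xy : le x y by rewrite -h; apply: meet_r.
apply: (le_anti HRA yt); apply: (card_min _ yt).
by apply: tmin; apply/andP.
Qed.

Lemma Eatom_le e z f : sub_atom o E e -> z <> zero -> le z e -> le z f -> E f -> le e f.
Proof.
move=> he znz ze zf Ef.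
case: (sub_atomP he (Emt (sub_atom_E he) Ef) (meet_l HRA e f)) => h.
  by exfalso; apply: znz; apply: (le0_eq HRA); rewrite -h; apply: meet_glb.
by rewrite -h; apply: meet_r.
Qed.

Lemma Eatom_uniq a c z : sub_atom o E a -> sub_atom o E c -> z <> zero ->
  le z a -> le z c -> a = c.
Proof.
move=> ha hc znz za zc; apply: (le_anti HRA).
  exact: (Eatom_le ha znz za zc (sub_atom_E hc)).
exact: (Eatom_le hc znz zc za (sub_atom_E ha)).
Qed.

Lemma sub_atom_div e x : sub_atom o E e -> x <> zero -> le x e ->
  le x (ra_diversity o) -> le e (ra_diversity o).
Proof.
move=> he xnz xe xd.
case: (sub_atomP he (Emt (sub_atom_E he) Eid) (meet_l HRA e (ra_id o))) => h.
  exact: meet0_le.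
have ei : le e (ra_id o) by rewrite -h; apply: meet_r.
exfalso; apply: xnz; apply: (le0_eq HRA).
rewrite -(meet_compl HRA (ra_id o)); apply: meet_glb => //.
exact: (le_trans HRA xe ei).
Qed.

Lemma catom_spec x : ra_datom o x ->
  exists c, catom x = Some c /\ sub_datom o E c /\ le x c.
Proof.
case/andP => ax xd.
have [e [he xe]] := Eatom_exists ax.
rewrite /catom_of; case: pickP => [c /andP [hc xc] | h].
  exists c; split => //; split => //; apply/andP; split => //.
  exact: (sub_atom_div hc (atom_nz ax) xc xd).
by have := h e; rewrite he xe.
Qed.

Lemma catom_eq x c : ra_datom o x -> sub_atom o E c -> le x c -> catom x = Some c.
Proof.
move=> dx hc xc. have [c' [-> [/andP [hc' _] xc']]] := catom_spec dx.
case/andP: dx => ax _.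
by rewrite (Eatom_uniq hc' hc (atom_nz ax) xc' xc).
Qed.

Lemma no_id c : sub_datom o E c -> ~ le (ra_id o) c.
Proof.
case/andP => _ cd ic. move: Hint => /atom_nz; apply.
apply: (le0_eq HRA); rewrite -(meet_compl HRA (ra_id o)).
apply: (meet_glb HRA (le_refl HRA _) (le_trans HRA ic cd)).
Qed.


Lemma ccyc_none_l v w : Ccycle o E None v (Some w) -> v = Some w.
Proof.
case: v => [[y j]|]; case: w => z k; rewrite /Ccycle /Cbase /=; intuition; subst; done.
Qed.
Lemma ccyc_none_r u w : Ccycle o E u None (Some w) -> u = Some w.
Proof.
case: u => [[y j]|]; case: w => z k; rewrite /Ccycle /Cbase /=; intuition; subst; done.
Qed.

Definition Ssat (X : Celt o) : Prop :=
  forall c, sub_datom o E c -> forall w w', J o c n w -> J o c n w' -> X w -> X w'.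

Lemma Jinv c w : sub_datom o E c -> J o c n w ->
  exists z k, w = Some (z, k) /\ le (val z) c /\ n <= k.
Proof.
move=> hc; case: w => [[z k]|] /=.
  by case=> zc kn; exists z, k.
by move=> h; exfalso; apply: (no_id hc h).
Qed.

Lemma datom_atom (x : datomA o) : ra_atom o (val x).
Proof. by case/andP: (valP x). Qed.

Lemma goodA (p q r p' q' r' : datomA o) (i j k i' j' k' : nat) P Q R :
  Cbase o E (Some (p, i)) (Some (q, j)) (Some (r, k)) ->
  catom (val p) = Some P -> catom (val q) = Some Q -> catom (val r) = Some R ->
  ~ (P = Q /\ Q = R) ->
  catom (val p') = Some P -> catom (val q') = Some Q -> catom (val r') = Some R ->
  Cbase o E (Some (p', i')) (Some (q', j')) (Some (r', k')).
Proof.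
move=> [h _] cp_ cq cr hne cp' cq' cr'.
have [P0 [cP [hP pP]]] := catom_spec (valP p).
have [Q0 [cQ [hQ qQ]]] := catom_spec (valP q).
have [R0 [cR [hR rR]]] := catom_spec (valP r).
have eP : P0 = P by congruence. have eQ : Q0 = Q by congruence.
have eR : R0 = R by congruence. subst P0 Q0 R0.
have [P1 [cP1 [_ pP']]] := catom_spec (valP p').
have [Q1 [cQ1 [_ qQ']]] := catom_spec (valP q').
have [R1 [cR1 [_ rR']]] := catom_spec (valP r').
have eP : P1 = P by congruence. have eQ : Q1 = Q by congruence.
have eR : R1 = R by congruence. subst P1 Q1 R1.
split; last first.
  by rewrite cp' cq' cr' => -[[e1] [e2]]; exfalso; apply: hne.
case: HSE => SE1 _.
have RPQ : le R (cmp P Q).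
  apply: (Eatom_le (z := val r)) => //.
  - by case/andP: hR.
  - exact: (atom_nz (datom_atom r)).
  - exact: (le_trans HRA h (comp_mono pP qQ)).
  - by apply: Ecmp; apply: sub_atom_E; [case/andP: hP|case/andP: hQ].
have := SE1 P Q R hP hQ hR hne RPQ (val p') (val q') (datom_atom p') (datom_atom q') pP' qQ'.
exact: (le_trans HRA rR').
Qed.

Lemma catom_inv (x : datomA o) c : catom (val x) = Some c ->
  sub_datom o E c /\ le (val x) c.
Proof.
move=> cx; have [c0 [cx0 [h1 h2]]] := catom_spec (valP x).
have e : c0 = c by congruence. by subst c0.
Qed.

Lemma goodB (p q r : datomA o) (i j k : nat) c :
  Cbase o E (Some (p, i)) (Some (q, j)) (Some (r, k)) ->
  catom (val p) = Some c -> catom (val q) = Some c -> catom (val r) = Some c ->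
  Tidx i j k /\ le c (cmp c c).
Proof.
move=> [h ht] cp_ cq cr; split; first by apply: ht; rewrite cp_ cq cr.
have [hc pc] := catom_inv cp_. have [_ qc] := catom_inv cq.
have [_ rc] := catom_inv cr.
apply: (Eatom_le (z := val r)) => //.
- by case/andP: hc.
- exact: (atom_nz (datom_atom r)).
- exact: (le_trans HRA h (comp_mono pc qc)).
- by apply: Ecmp; apply: sub_atom_E; case/andP: hc.
Qed.

Lemma mk_datom c y : sub_datom o E c -> ra_atom o y -> le y c -> ra_datom o y.
Proof.
move=> /andP [_ cd] ay yc; apply/andP; split => //; exact: (le_trans HRA yc cd).
Qed.

Lemma SE2_atom c (x z : datomA o) : sub_datom o E c -> le c (cmp c c) ->
  le (val x) c -> le (val z) c ->
  exists y : datomA o, le (val y) (cmp (val x) (val z)) /\ le (val y) c.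
Proof.
move=> hc cc xc zc.
case: HSE => _ SE2.
have := SE2 c hc cc (val x) (val z) (datom_atom x) (datom_atom z) xc zc.
case/exists_atom => y [ay ym].
have yc : le y c := le_trans HRA ym (meet_r HRA _ _).
exists (exist _ y (mk_datom hc ay yc)); split => //=.
exact: (le_trans HRA ym (meet_l HRA _ _)).
Qed.

Lemma Ssat_comp X Y : Ssat X -> Ssat Y -> Ssat (C_comp o E X Y).
Proof.
move=> SX SY c hc w w' hw hw' [u [v [Xu [Yv cyc]]]].
have [z [k [ew [zc kn]]]] := Jinv hc hw.
have [z' [k' [ew' [z'c k'n]]]] := Jinv hc hw'.
subst w w'.
case: u Xu cyc => [[x i]|] Xu cyc; last first.
  have ev := ccyc_none_l cyc; subst v.
  exists None, (Some (z', k')); split => //; split.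
    exact: (SY c hc _ _ hw hw' Yv).
  by left.
case: v Yv cyc => [[y j]|] Yv cyc; last first.
  have eu := ccyc_none_r cyc; rewrite eu in Xu.
  exists (Some (z', k')), None; split.
    exact: (SX c hc _ _ hw hw' Xu).
  by split => //; right; right; left.
have hca : sub_atom o E c by case/andP: hc.
have cz : catom (val z) = Some c := catom_eq (valP z) hca zc.
have cz' : catom (val z') = Some c := catom_eq (valP z') hca z'c.
have [P [cx [_ _]]] := catom_spec (valP x).
have [Q [cy [_ _]]] := catom_spec (valP y).
case: (classic (P = Q /\ Q = c)) => [[ePQ eQc] | hne].
  subst P Q.
  have [xc _] := (catom_inv cx, tt). have [_ xc'] := xc.
  have [_ yc] := catom_inv cy.
  have [Tijk cc] : Tidx i j k /\ le c (cmp c c).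
    case: cyc => [h|[h|[h|[h|[h|h]]]]];
      [ have [t cc] := goodB h cx cy cz
      | have [t cc] := goodB h cx cz cy
      | have [t cc] := goodB h cy cx cz
      | have [t cc] := goodB h cy cz cx
      | have [t cc] := goodB h cz cx cy
      | have [t cc] := goodB h cz cy cx ];
      split => //; move: t; rewrite /Tidx; lia.
  case: (ltnP i n) => hi; case: (ltnP j n) => hj.
  - by exfalso; move: Tijk; rewrite /Tidx; lia.
  - have [y0 [y0m y0c]] := SE2_atom hc cc xc' z'c.
    exists (Some (x, i)), (Some (y0, k')); split => //; split.
      by apply: (SY c hc (Some (y, j))) => //.
    right; left; split => // _; rewrite /Tidx; lia.
  - have [x0 [x0m x0c]] := SE2_atom hc cc yc z'c.
    exists (Some (x0, k')), (Some (y, j)); split.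
      by apply: (SX c hc (Some (x, i))) => //.
    split => //.
    right; right; right; left; split => // _; rewrite /Tidx; lia.
  - have [y0 [y0m y0c]] := SE2_atom hc cc z'c z'c.
    exists (Some (z', k')), (Some (y0, k')); split.
      by apply: (SX c hc (Some (x, i))) => //.
    split; first by apply: (SY c hc (Some (y, j))) => //.
    right; left; split => // _; rewrite /Tidx; lia.
exists (Some (x, i)), (Some (y, j)); split => //; split => //.
case: cyc => [h|[h|[h|[h|[h|h]]]]].
- left; apply: (@goodA _ _ _ _ _ _ _ _ _ _ _ _ _ _ _ h cx cy cz hne cx cy cz').
- right; left; apply: (@goodA _ _ _ _ _ _ _ _ _ _ _ _ _ _ _ h cx cz cy _ cx cz' cy).
  by move=> [? ?]; apply: hne; split; congruence.
- right; right; left; apply: (@goodA _ _ _ _ _ _ _ _ _ _ _ _ _ _ _ h cy cx cz _ cy cx cz').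
  by move=> [? ?]; apply: hne; split; congruence.
- right; right; right; left; apply: (@goodA _ _ _ _ _ _ _ _ _ _ _ _ _ _ _ h cy cz cx _ cy cz' cx).
  by move=> [? ?]; apply: hne; split; congruence.
- right; right; right; right; left; apply: (@goodA _ _ _ _ _ _ _ _ _ _ _ _ _ _ _ h cz cx cy _ cz' cx cy).
  by move=> [? ?]; apply: hne; split; congruence.
- right; right; right; right; right; apply: (@goodA _ _ _ _ _ _ _ _ _ _ _ _ _ _ _ h cz cy cx _ cz' cy cx).
  by move=> [? ?]; apply: hne; split; congruence.
Qed.

Lemma Ssat_id : Ssat C_id.
Proof.
move=> c hc w w' hw _ ew; rewrite /C_id in ew; subst w.
by exfalso; apply: (no_id hc hw).
Qed.

Lemma Ssat_single x i : i < n -> Ssat (fun w => w = Some (x, i)).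
Proof.
move=> hi c hc w w' hw _ ew; subst w.
case: hw => _ h; exfalso; lia.
Qed.

Lemma Ssat_J a : sub_datom o E a -> Ssat (J o a n).
Proof.
move=> ha c hc w w' hw hw' hJ.
have [z [k [ew [zc kn]]]] := Jinv hc hw; subst w.
case: hJ => za _.
have e : a = c.
  apply: (Eatom_uniq (z := val z)); [by case/andP: ha|by case/andP: hc| |by []|by []].
  exact: (atom_nz (datom_atom z)).
by subst a.
Qed.

Lemma Celt_ext (X Y : Celt o) : (forall w, X w <-> Y w) -> X = Y.
Proof.
move=> h; apply: functional_extensionality => w.
by apply: propositional_extensionality.
Qed.

Lemma nonzero_ex (X : Celt o) : X <> C_zero -> exists w, X w.
Proof.
move=> hX; apply: NNPP => hn; apply: hX; apply: Celt_ext => w; split => //.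
by move=> Xw; apply: hn; exists w.
Qed.

Lemma not_zero (X : Celt o) w : X w -> X <> C_zero.
Proof. by move=> Xw h; rewrite h in Xw. Qed.

Lemma atom_iff X : C_sub_atom o Ssat X <-> Bn o E n X.
Proof.
split.
  move=> [SX [Xnz Xmin]].
  have [w Xw] := nonzero_ex Xnz.
  case: w Xw => [[x i]|] Xw; last first.
    case: (Xmin C_id Ssat_id) => [w0 e|h|h]; first by rewrite e.
      by exfalso; apply: (@not_zero C_id None).
    by left.
  case: (ltnP i n) => hi.
    case: (Xmin _ (@Ssat_single x i hi)) => [w0 e|h|h]; first by rewrite e.
      by exfalso; apply: (@not_zero _ (Some (x, i)) erefl h).
    by right; left; exists x, i; split.
  have [c [_ [hc xc]]] := catom_spec (valP x).
  have hw : J o c n (Some (x, i)) by split.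
  case: (Xmin _ (Ssat_J hc)) => [w0 hw0|h|h].
  - exact: (SX c hc _ _ hw hw0 Xw).
  - by exfalso; apply: (not_zero hw h).
  - by right; right; exists c.
case=> [->|[[x [i [hi ->]]]|[a [ha ->]]]].
- split; first exact: Ssat_id.
  split.
    exact: (@not_zero C_id None).
  move=> Y SY YX; case: (classic (Y None)) => hY.
    by right; apply: Celt_ext => w; split => [/YX|e] //; rewrite e.
  left; apply: Celt_ext => w; split => // Yw; have e := YX _ Yw; cbv beta delta [C_id] in e; subst w; exact: hY Yw.
- split; first exact: Ssat_single.
  split.
    exact: (@not_zero _ (Some (x, i)) erefl).
  move=> Y SY YX; case: (classic (Y (Some (x, i)))) => hY.
    by right; apply: Celt_ext => w; split => [/YX|e] //; rewrite e.
  left; apply: Celt_ext => w; split => // Yw; have e := YX _ Yw; cbv beta delta [C_id] in e; subst w; exact: hY Yw.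
- split; first exact: Ssat_J.
  have anz : a <> zero by apply: sub_atom_nz; case/andP: ha.
  split.
    have [y [ay ya]] := exists_atom anz.
    have dy := mk_datom ha ay ya.
    by apply: (@not_zero _ (Some (exist _ y dy, n))); split.
  move=> Y SY YX; case: (classic (exists w, Y w)) => [[w Yw]|hY].
    right; apply: Celt_ext => w'; split; first by apply: YX.
    move=> hw'; exact: (SY a ha w w' (YX _ Yw) hw' Yw).
  by left; apply: Celt_ext => w; split => // Yw; apply: hY; exists w.
Qed.

End Main.

Theorem lemma4 (T : finType) (o : ra_ops T) (E : {pred T}) :
  is_RA o -> ra_integral o -> ra_symmetric o ->
  ra_subalg o E -> sub_integral o E ->
  special_extension o E ->
  forall n : nat,
    exists S : Celt o -> Prop,
      C_subalg o E S /\ (forall X, C_sub_atom o S X <-> Bn o E n X).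
Proof.
move=> HRA Hint Hsym Hsub _ HSE n.
exists (Ssat E n); split; last by move=> X; apply: atom_iff.
split; first by move=> c _ w w' _ _.
split; first exact: Ssat_id.
split.
  by move=> X Y SX SY c hc w w' hw hw' [h|h]; [left; apply: (SX c hc w)|right; apply: (SY c hc w)].
split.
  by move=> X SX c hc w w' hw hw' nX Xw'; apply: nX; apply: (SX c hc w' w).
split; first by [].
move=> X Y SX SY; exact: (Ssat_comp HRA Hint Hsym Hsub HSE SX SY).
Qed.
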